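(* Let $k>0$ and consider the system of ODEs, for $r>0$, $\theta$, $z$, $p_R$, $p_S$ real, \[ \dot r = p_R,\quad \dot\theta = \frac{p_S}{r^2},\quad \dot z = \frac{p_S}{2},\quad \dot p_R = \frac{p_S^2}{r^3} - \frac{2kr^3}{(r^4+16z^2)^{3/2}},\quad \dot p_S = -\frac{8kr^2 z}{(r^4+16z^2)^{3/2}}. \] Then the following functions, quadratic in the momenta, are first integrals of the system: \begin{align*} F_1 &= \Big(p_Rp_Sr-2p_R^2z+\frac{2p_S^2z}{r^2}\Big)\cos(2\theta) + \Big(\frac{4p_Rp_Sz}{r}-p_S^2+\frac{kr^2}{\sqrt{r^4+16z^2}}\Big)\sin(2\theta),\\ F_2 &= -\Big(p_Rp_Sr-2p_R^2z+\frac{2p_S^2z}{r^2}\Big)\sin(2\theta) + \Big(\frac{4p_Rp_Sz}{r}-p_S^2+\frac{kr^2}{\sqrt{r^4+16z^2}}\Big)\cos(2\theta),\\ F_3 &= (2zp_R-rp_S)^2 + 4z^2\Big(\frac{p_S^2}{r^2}+\frac{2k}{\sqrt{r^4+16z^2}}\Big). \end{align*} Moreover, with $H = \frac12\big(p_R^2+\frac{p_S^2}{r^2}\big) - \frac{k}{\sqrt{r^4+16z^2}}$, any three of $H,F_1,F_2,F_3$ are functionally independent almost everywhere, and they satisfy the relation $F_1^2+F_2^2 = 2HF_3 + k^2$.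
   Context: A first integral is a function of $(r,\theta,z,p_R,p_S)$ constant along all solutions. The system describes nonholonomic motion on the Heisenberg group in the potential $-k/\sqrt{r^4+16z^2}$ in cylindrical coordinates, with Hamiltonian $H$. *)

(* Defs.v *)
From Stdlib Require Import Reals.
From Coquelicot Require Import Coquelicot.
Open Scope R_scope.

(* A function of the phase-space point (r, theta, z, pR, pS). *)
Definition phasefun := R -> R -> R -> R -> R -> R.

Definition rho (r z : R) : R := r ^ 4 + 16 * z ^ 2.

Definition Ham (k : R) : phasefun := fun r th z pR pS =>
  / 2 * (pR ^ 2 + pS ^ 2 / r ^ 2) - k / sqrt (rho r z).

Definition A_coef (r z pR pS : R) : R :=
  pR * pS * r - 2 * pR ^ 2 * z + 2 * pS ^ 2 * z / r ^ 2.
Definition B_coef (k r z pR pS : R) : R :=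
  4 * pR * pS * z / r - pS ^ 2 + k * r ^ 2 / sqrt (rho r z).

Definition F1 (k : R) : phasefun := fun r th z pR pS =>
  A_coef r z pR pS * cos (2 * th) + B_coef k r z pR pS * sin (2 * th).
Definition F2 (k : R) : phasefun := fun r th z pR pS =>
  - A_coef r z pR pS * sin (2 * th) + B_coef k r z pR pS * cos (2 * th).
Definition F3 (k : R) : phasefun := fun r th z pR pS =>
  (2 * z * pR - r * pS) ^ 2
  + 4 * z ^ 2 * (pS ^ 2 / r ^ 2 + 2 * k / sqrt (rho r z)).

Definition is_solution (k a b : R) (r th z pR pS : R -> R) : Prop :=
  forall t, a < t < b ->
    0 < r t /\
    is_derive r t (pR t) /\
    is_derive th t (pS t / (r t) ^ 2) /\
    is_derive z t (pS t / 2) /\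
    is_derive pR t ((pS t) ^ 2 / (r t) ^ 3
                     - 2 * k * (r t) ^ 3 / Rpower (rho (r t) (z t)) (3 / 2)) /\
    is_derive pS t (- (8 * k * (r t) ^ 2 * z t) / Rpower (rho (r t) (z t)) (3 / 2)).

Definition first_integral (k : R) (F : phasefun) : Prop :=
  forall (a b : R) (r th z pR pS : R -> R),
    is_solution k a b r th z pR pS ->
    forall t1 t2, a < t1 < b -> a < t2 < b ->
      F (r t1) (th t1) (z t1) (pR t1) (pS t1) = F (r t2) (th t2) (z t2) (pR t2) (pS t2).

Definition d_r (f : phasefun) r th z pR pS := Derive (fun x => f x th z pR pS) r.
Definition d_th (f : phasefun) r th z pR pS := Derive (fun x => f r x z pR pS) th.
Definition d_z (f : phasefun) r th z pR pS := Derive (fun x => f r th x pR pS) z.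
Definition d_pR (f : phasefun) r th z pR pS := Derive (fun x => f r th z x pS) pR.
Definition d_pS (f : phasefun) r th z pR pS := Derive (fun x => f r th z pR x) pS.

Definition indep_at (f g h : phasefun) (r th z pR pS : R) : Prop :=
  forall a b c : R,
    a * d_r f r th z pR pS + b * d_r g r th z pR pS + c * d_r h r th z pR pS = 0 ->
    a * d_th f r th z pR pS + b * d_th g r th z pR pS + c * d_th h r th z pR pS = 0 ->
    a * d_z f r th z pR pS + b * d_z g r th z pR pS + c * d_z h r th z pR pS = 0 ->
    a * d_pR f r th z pR pS + b * d_pR g r th z pR pS + c * d_pR h r th z pR pS = 0 ->
    a * d_pS f r th z pR pS + b * d_pS g r th z pR pS + c * d_pS h r th z pR pS = 0 ->
    a = 0 /\ b = 0 /\ c = 0.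

(* Lebesgue-null subsets of R^5: coverable by countably many closed boxes
   of arbitrarily small total volume. *)
Definition null5 (S : R -> R -> R -> R -> R -> Prop) : Prop :=
  forall eps : R, 0 < eps ->
  exists lo hi : nat -> nat -> R,
    (forall n j, lo n j <= hi n j) /\
    (forall x0 x1 x2 x3 x4, S x0 x1 x2 x3 x4 ->
       exists n, lo n 0%nat <= x0 <= hi n 0%nat /\ lo n 1%nat <= x1 <= hi n 1%nat /\
                 lo n 2%nat <= x2 <= hi n 2%nat /\ lo n 3%nat <= x3 <= hi n 3%nat /\
                 lo n 4%nat <= x4 <= hi n 4%nat) /\
    (forall N, sum_f_R0 (fun n => (hi n 0%nat - lo n 0%nat) * (hi n 1%nat - lo n 1%nat)
                               * (hi n 2%nat - lo n 2%nat) * (hi n 3%nat - lo n 3%nat)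
                               * (hi n 4%nat - lo n 4%nat)) N <= eps).

Definition indep_ae (f g h : phasefun) : Prop :=
  null5 (fun r th z pR pS => 0 < r /\ ~ indep_at f g h r th z pR pS).

(* Main.v *)
Require Import Defs.
From Stdlib Require Import Reals Lra Lia ZArith Nsatz.
From Stdlib Require Import IndefiniteDescription ClassicalEpsilon.
From Coquelicot Require Import Coquelicot.
Open Scope R_scope.
Lemma Rpower32 x : 0 < x -> Rpower x (3/2) = x * sqrt x.
Proof. intros Hx. replace (3/2) with (1 + /2) by field.
  rewrite Rpower_plus, Rpower_1, Rpower_sqrt; auto. Qed.

Lemma const_deriv0 (phi : R -> R) (a b : R) :
  (forall t, a < t < b -> is_derive phi t 0) ->
  forall t1 t2, a < t1 < b -> a < t2 < b -> phi t1 = phi t2.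
Proof.
  intros H t1 t2 H1 H2.
  assert (Hm : a < Rmin t1 t2) by (apply Rmin_glb_lt; lra).
  assert (HM : Rmax t1 t2 < b) by (apply Rmax_lub_lt; lra).
  destruct (MVT_gen phi t1 t2 (fun _ => 0)) as [c [_ Hc]].
  - intros x Hx. apply H. lra.
  - intros x Hx. apply continuity_pt_filterlim. refine (ex_derive_continuous phi x _).
    eexists. apply H. lra.
  - lra.
Qed.

Ltac prep k r th z pR pS Hsol t Ht :=
  let Hr := fresh "Hr" in let Dr := fresh "Dr" in let Dth := fresh "Dth" in
  let Dz := fresh "Dz" in let DpR := fresh "DpR" in let DpS := fresh "DpS" in
  let Hrho := fresh "Hrho" in
  destruct (Hsol t Ht) as [Hr [Dr [Dth [Dz [DpR DpS]]]]];
  assert (Hrho : 0 < rho (r t) (z t)) by (unfold rho; generalize (pow_lt _ 4 Hr) (pow2_ge_0 (z t)); lra);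
  rewrite Rpower32 in DpR, DpS by exact Hrho;
  unfold rho in *;
  auto_derive; [ repeat split; try (eexists; eassumption);
     try (eapply Rlt_le_trans; [exact Hrho| right; ring]);
     try (apply Rgt_not_eq; apply Rlt_gt; nra);
     try (apply Rgt_not_eq; apply Rlt_gt; apply sqrt_lt_R0; eapply Rlt_le_trans; [exact Hrho| right; ring]) | ];
  try replace (Derive (fun x => r x) t) with (pR t) by (symmetry; apply is_derive_unique; exact Dr);
  try replace (Derive (fun x => th x) t) with (pS t / r t ^ 2) by (symmetry; apply is_derive_unique; exact Dth);
  try replace (Derive (fun x => z x) t) with (pS t / 2) by (symmetry; apply is_derive_unique; exact Dz);
  try replace (Derive (fun x => pR x) t) with (pS t ^ 2 / r t ^ 3 - 2 * k * r t ^ 3 / ((r t ^ 4 + 16 * z t ^ 2) * sqrt (r t ^ 4 + 16 * z t ^ 2))) by (symmetry; apply is_derive_unique; exact DpR);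
  try replace (Derive (fun x => pS x) t) with (- (8 * k * r t ^ 2 * z t) / ((r t ^ 4 + 16 * z t ^ 2) * sqrt (r t ^ 4 + 16 * z t ^ 2))) by (symmetry; apply is_derive_unique; exact DpS);
  try replace (r t * (r t * (r t * (r t * 1))) + 16 * (z t * (z t * 1))) with (r t ^ 4 + 16 * z t ^ 2) by ring;
  let HS := fresh "HS" in let HS0 := fresh "HS0" in
  assert (HS : sqrt (r t ^ 4 + 16 * z t ^ 2) * sqrt (r t ^ 4 + 16 * z t ^ 2) = r t ^ 4 + 16 * z t ^ 2) by (apply sqrt_sqrt; lra);
  assert (HS0 : 0 < sqrt (r t ^ 4 + 16 * z t ^ 2)) by (apply sqrt_lt_R0; lra);
  let S := fresh "S" in
  set (S := sqrt (r t ^ 4 + 16 * z t ^ 2)) in *;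
  clearbody S;
  generalize (r t) (th t) (z t) (pR t) (pS t) Hr HS HS0; clear; intros R0 TH Z PR PS Hr HS HS0.


Ltac close_alg R0 Z S HS :=
rewrite <- HS; field_simplify; try lra;
let h2 := fresh in let h3 := fresh in let h4 := fresh in let h5 := fresh in let h6 := fresh in
assert (h2 : S^2 = R0^4 + 16 * Z^2) by (rewrite <- HS; ring);
assert (h3 : S^3 = (R0^4 + 16 * Z^2) * S) by (rewrite <- HS; ring);
assert (h4 : S^4 = (R0^4 + 16 * Z^2)^2) by (rewrite <- HS; ring);
assert (h5 : S^5 = (R0^4 + 16 * Z^2)^2 * S) by (rewrite <- HS; ring);
assert (h6 : S^6 = (R0^4 + 16 * Z^2)^3) by (rewrite <- HS; ring);
match goal with |- ?N / ?D = 0 => replace N with 0 by (rewrite ?h2, ?h3, ?h4, ?h5, ?h6; ring) end; unfold Rdiv; ring.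

Lemma fi_of (k : R) (F : phasefun) :
  (forall a b r th z pR pS, is_solution k a b r th z pR pS -> forall t, a < t < b ->
     is_derive (fun t => F (r t) (th t) (z t) (pR t) (pS t)) t 0) ->
  first_integral k F.
Proof.
  intros HF a b r th z pR pS Hsol t1 t2 H1 H2.
  apply (const_deriv0 (fun t => F (r t) (th t) (z t) (pR t) (pS t)) a b); auto.
  intros t Ht; eapply HF; eauto.
Qed.

Lemma F1_fi k : first_integral k (F1 k).
Proof.
apply fi_of. intros a b r th z pR pS Hsol t Ht.
unfold F1; try unfold A_coef, B_coef.
prep k r th z pR pS Hsol t Ht.
close_alg R0 Z S HS.
Qed.

Lemma F2_fi k : first_integral k (F2 k).
Proof.
apply fi_of. intros a b r th z pR pS Hsol t Ht.
unfold F2; try unfold A_coef, B_coef.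
prep k r th z pR pS Hsol t Ht.
close_alg R0 Z S HS.
Qed.

Lemma F3_fi k : first_integral k (F3 k).
Proof.
apply fi_of. intros a b r th z pR pS Hsol t Ht.
unfold F3; try unfold A_coef, B_coef.
prep k r th z pR pS Hsol t Ht.
close_alg R0 Z S HS.
Qed.

Lemma Ham_fi k : first_integral k (Ham k).
Proof.
apply fi_of. intros a b r th z pR pS Hsol t Ht.
unfold Ham; try unfold A_coef, B_coef.
prep k r th z pR pS Hsol t Ht.
close_alg R0 Z S HS.
Qed.

Definition vol (lo hi : nat -> nat -> R) (n : nat) : R :=
  (hi n 0%nat - lo n 0%nat) * (hi n 1%nat - lo n 1%nat)
  * (hi n 2%nat - lo n 2%nat) * (hi n 3%nat - lo n 3%nat)
  * (hi n 4%nat - lo n 4%nat).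

Lemma vol_nonneg lo hi n : (forall n j, lo n j <= hi n j) -> 0 <= vol lo hi n.
Proof.
  intros H. unfold vol.
  repeat apply Rmult_le_pos; generalize (H n 0%nat) (H n 1%nat) (H n 2%nat) (H n 3%nat) (H n 4%nat); lra.
Qed.

Lemma null5_mono (S T : R -> R -> R -> R -> R -> Prop) :
  (forall a b c d e, S a b c d e -> T a b c d e) -> null5 T -> null5 S.
Proof.
  intros HST HT eps Heps. destruct (HT eps Heps) as [lo [hi [H1 [H2 H3]]]].
  exists lo, hi. split; [exact H1|split; [|exact H3]].
  intros; apply H2; auto.
Qed.

Lemma archi (x : R) : exists n : nat, x < INR n.
Proof.
  destruct (archimed x) as [H1 _].
  destruct (Z_le_gt_dec 0 (up x)) as [Hz|Hz].
  - exists (Z.to_nat (up x)). rewrite INR_IZR_INZ, Z2Nat.id by exact Hz. lra.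
  - exists 0%nat. simpl. apply Z.gt_lt in Hz. apply IZR_lt in Hz. lra.
Qed.

(* decoding for countable unions *)
Fixpoint dec (f m n : nat) : nat * nat :=
  match f with
  | O => (m, O)
  | S f' => if Nat.even n then (m, Nat.div2 n) else dec f' (S m) (Nat.div2 n)
  end.

Lemma dec_fuel f f' m n : (n < f)%nat -> (n < f')%nat -> dec f m n = dec f' m n.
Proof.
  revert f' m n. induction f as [|f IH]; intros f' m n H1 H2; [lia|].
  destruct f' as [|f']; [lia|]. simpl. destruct (Nat.even n) eqn:E; auto.
  apply IH.
  - destruct n; [discriminate|]. pose proof (Nat.le_div2 n). lia.
  - destruct n; [discriminate|]. pose proof (Nat.le_div2 n). lia.
Qed.

Definition D m n := dec (S n) m n.

Lemma D_even m i : D m (2 * i) = (m, i).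
Proof. unfold D. cbn [dec]. rewrite Nat.even_mul. cbn [orb Nat.even]. rewrite Nat.div2_double. auto. Qed.

Lemma dec_S f m n : dec (S f) m n = if Nat.even n then (m, Nat.div2 n) else dec f (S m) (Nat.div2 n).
Proof. reflexivity. Qed.

Lemma D_odd m i : D m (S (2 * i)) = D (S m) i.
Proof.
  unfold D. rewrite dec_S.
  replace (Nat.even (S (2 * i))) with false by (rewrite Nat.even_succ, Nat.odd_mul; reflexivity).
  rewrite Nat.div2_succ_double. apply dec_fuel; lia.
Qed.

Lemma D_surj m i m0 : exists n, D m0 n = (m0 + m, i)%nat.
Proof.
  revert m0. induction m as [|m IH]; intros m0.
  - exists (2 * i)%nat. rewrite D_even. f_equal; lia.
  - destruct (IH (S m0)) as [n Hn]. exists (S (2 * n)). rewrite D_odd, Hn. f_equal; lia.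
Qed.

Lemma sum_split (w : nat -> R) K :
  sum_f_R0 w (S (2 * K)) = sum_f_R0 (fun i => w (2 * i)%nat) K + sum_f_R0 (fun i => w (S (2 * i))) K.
Proof.
  induction K as [|K IH].
  - simpl. ring.
  - replace (S (2 * S K)) with (S (S (S (2 * K)))) by lia.
    rewrite (tech5 w (S (S (2 * K)))), (tech5 w (S (2 * K))), IH.
    rewrite (tech5 (fun i => w (2 * i)%nat) K), (tech5 (fun i => w (S (2 * i))) K).
    replace (2 * S K)%nat with (S (S (2 * K))) by lia. ring.
Qed.

Lemma sum_mono_N (w : nat -> R) N M : (forall n, 0 <= w n) -> (N <= M)%nat -> sum_f_R0 w N <= sum_f_R0 w M.
Proof.
  intros Hw HNM. induction HNM; [lra|]. rewrite tech5. specialize (Hw (S m)). lra.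
Qed.

Lemma null5_seq (Sf : nat -> R -> R -> R -> R -> R -> Prop) :
  (forall m, null5 (Sf m)) -> null5 (fun a b c d e => exists m, Sf m a b c d e).
Proof.
  intros HS eps Heps.
  assert (Hc : forall m : nat, exists p : (nat -> nat -> R) * (nat -> nat -> R),
    (forall n j, fst p n j <= snd p n j) /\
    (forall x0 x1 x2 x3 x4, Sf m x0 x1 x2 x3 x4 ->
       exists n, fst p n 0%nat <= x0 <= snd p n 0%nat /\ fst p n 1%nat <= x1 <= snd p n 1%nat /\
                 fst p n 2%nat <= x2 <= snd p n 2%nat /\ fst p n 3%nat <= x3 <= snd p n 3%nat /\
                 fst p n 4%nat <= x4 <= snd p n 4%nat) /\
    (forall N, sum_f_R0 (vol (fst p) (snd p)) N <= eps / 2 ^ (S m))).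
  { intros m. destruct (HS m (eps / 2 ^ (S m))) as [lo [hi H]].
    - apply Rdiv_lt_0_compat; [lra| apply pow_lt; lra].
    - exists (lo, hi). exact H. }
  set (P := fun m p => (forall n j, fst p n j <= snd p n j) /\
    (forall x0 x1 x2 x3 x4, Sf m x0 x1 x2 x3 x4 ->
       exists n, fst p n 0%nat <= x0 <= snd p n 0%nat /\ fst p n 1%nat <= x1 <= snd p n 1%nat /\
                 fst p n 2%nat <= x2 <= snd p n 2%nat /\ fst p n 3%nat <= x3 <= snd p n 3%nat /\
                 fst p n 4%nat <= x4 <= snd p n 4%nat) /\
    (forall N, sum_f_R0 (vol (fst p) (snd p)) N <= eps / 2 ^ (S m))) in Hc.
  assert (Hf : {f : nat -> (nat -> nat -> R) * (nat -> nat -> R) | forall m, P m (f m)}).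
  { apply constructive_indefinite_description.
    exists (fun m => proj1_sig (constructive_indefinite_description _ (Hc m))).
    intros m. exact (proj2_sig (constructive_indefinite_description _ (Hc m))). }
  destruct Hf as [f Hf].
  set (LO := fun m => fst (f m)). set (HI := fun m => snd (f m)).
  exists (fun n j => LO (fst (D 0 n)) (snd (D 0 n)) j), (fun n j => HI (fst (D 0 n)) (snd (D 0 n)) j).
  split; [|split].
  - intros n j. apply (proj1 (Hf _)).
  - intros x0 x1 x2 x3 x4 [m Hm].
    destruct (proj1 (proj2 (Hf m)) _ _ _ _ _ Hm) as [i Hi].
    destruct (D_surj m i 0) as [n Hn]. exists n. rewrite Hn. simpl. exact Hi.
  -
    set (V := fun p : nat * nat => vol (LO (fst p)) (HI (fst p)) (snd p)).
    assert (HV : forall p, 0 <= V p).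
    { intros [m i]. unfold V. apply vol_nonneg. apply (proj1 (Hf m)). }
    assert (Hv : forall m N, sum_f_R0 (fun i => V (m, i)) N <= eps / 2 ^ (S m)).
    { intros m N. unfold V. simpl. apply (proj2 (proj2 (Hf m))). }
    assert (Hpow : forall m, eps / 2 ^ (S (S m)) <= eps / 2 ^ (S m)).
    { intros m. simpl. unfold Rdiv. apply Rmult_le_compat_l; [lra|].
      apply Rinv_le_contravar; [apply Rmult_lt_0_compat; [lra| apply pow_lt; lra]|].
      generalize (pow_lt 2 m ltac:(lra)). nra. }
    assert (Hhalf : forall m, eps / 2 ^ (S m) + eps / 2 ^ (S m) = eps / 2 ^ m).
    { intros m. simpl. field. apply pow_nonzero. lra. }
    assert (Key : forall K m, sum_f_R0 (fun n => V (D m n)) (S (2 * K)) <= eps / 2 ^ m).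
    { intros K. induction K as [K IH] using (well_founded_induction lt_wf). intros m.
      rewrite sum_split. rewrite <- Hhalf.
      apply Rplus_le_compat.
      - apply Rle_trans with (2 := Hv m K). right. apply sum_eq. intros i _. rewrite D_even. auto.
      - assert (E : sum_f_R0 (fun i => V (D m (S (2 * i)))) K = sum_f_R0 (fun i => V (D (S m) i)) K).
        { apply sum_eq. intros i _. rewrite D_odd. auto. }
        rewrite E. destruct K as [|K'].
        + simpl. replace (D (S m) 0) with (S m, 0%nat) by (rewrite <- (D_even (S m) 0); f_equal).
          apply Rle_trans with (2 := Hpow m). apply Rle_trans with (2 := Hv (S m) 0%nat). simpl. lra.
        + apply Rle_trans with (sum_f_R0 (fun n => V (D (S m) n)) (S (2 * K'))).
          * apply sum_mono_N; [intros; apply HV| lia].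
          * apply IH. lia. }
    intros N. apply Rle_trans with (sum_f_R0 (fun n => V (D 0 n)) (S (2 * N))).
    + apply Rle_trans with (sum_f_R0 (fun n => V (D 0 n)) N).
      * right. apply sum_eq. intros. unfold V, vol. reflexivity.
      * apply sum_mono_N; [intros; apply HV| lia].
    + replace eps with (eps / 2 ^ 0) by (simpl; field). apply Key.
Qed.

Definition sw14 (j : nat) : nat := match j with 1%nat => 4%nat | 4%nat => 1%nat | _ => j end.
Lemma null5_swap14 (T : R -> R -> R -> R -> R -> Prop) :
  null5 (fun x0 x1 x2 x3 x4 => T x0 x4 x2 x3 x1) -> null5 T.
Proof.
  intros H eps Heps. destruct (H eps Heps) as [lo [hi [H1 [H2 H3]]]].
  exists (fun n j => lo n (sw14 j)), (fun n j => hi n (sw14 j)).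
  split; [|split].
  - intros; apply H1.
  - intros x0 x1 x2 x3 x4 HT. destruct (H2 x0 x4 x2 x3 x1 HT) as [n Hn]. exists n. simpl. tauto.
  - intros N. eapply Rle_trans; [|apply (H3 N)]. right. apply sum_eq. intros. simpl. ring.
Qed.

Definition sw24 (j : nat) : nat := match j with 2%nat => 4%nat | 4%nat => 2%nat | _ => j end.
Lemma null5_swap24 (T : R -> R -> R -> R -> R -> Prop) :
  null5 (fun x0 x1 x2 x3 x4 => T x0 x1 x4 x3 x2) -> null5 T.
Proof.
  intros H eps Heps. destruct (H eps Heps) as [lo [hi [H1 [H2 H3]]]].
  exists (fun n j => lo n (sw24 j)), (fun n j => hi n (sw24 j)).
  split; [|split].
  - intros; apply H1.
  - intros x0 x1 x2 x3 x4 HT. destruct (H2 x0 x1 x4 x3 x2 HT) as [n Hn]. exists n. simpl. tauto.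
  - intros N. eapply Rle_trans; [|apply (H3 N)]. right. apply sum_eq. intros. simpl. ring.
Qed.

Definition sw34 (j : nat) : nat := match j with 3%nat => 4%nat | 4%nat => 3%nat | _ => j end.
Lemma null5_swap34 (T : R -> R -> R -> R -> R -> Prop) :
  null5 (fun x0 x1 x2 x3 x4 => T x0 x1 x2 x4 x3) -> null5 T.
Proof.
  intros H eps Heps. destruct (H eps Heps) as [lo [hi [H1 [H2 H3]]]].
  exists (fun n j => lo n (sw34 j)), (fun n j => hi n (sw34 j)).
  split; [|split].
  - intros; apply H1.
  - intros x0 x1 x2 x3 x4 HT. destruct (H2 x0 x1 x2 x4 x3 HT) as [n Hn]. exists n. simpl. tauto.
  - intros N. eapply Rle_trans; [|apply (H3 N)]. right. apply sum_eq. intros. simpl. ring.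
Qed.

Lemma cell_exists (M : nat) (dl t : R) : 0 < dl -> (0 < M)%nat -> 0 <= t <= INR M * dl ->
  exists i, (i < M)%nat /\ INR i * dl <= t <= INR (S i) * dl.
Proof.
  intros Hd. induction M as [|M IH]; intros HM Ht; [lia|].
  destruct (Nat.eq_dec M 0) as [->|HM0].
  - exists 0%nat. split; [lia|]. simpl in *. lra.
  - destruct (Rle_dec t (INR M * dl)) as [Hle|Hgt].
    + destruct IH as [i [Hi1 Hi2]]; [lia|lra|]. exists i. split; [lia|lra].
    + exists M. split; [lia|]. lra.
Qed.

Lemma sum_count (v : nat -> R) (T : nat) (V : R) : 0 <= V ->
  (forall n, (n < T)%nat -> v n = V) -> (forall n, (T <= n)%nat -> v n = 0) ->
  forall N, sum_f_R0 v N <= INR T * V.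
Proof.
  intros HV H1 H2 N.
  assert (E : forall N, sum_f_R0 v N = INR (Nat.min (S N) T) * V).
  { induction N0 as [|N0 IH].
    - simpl. destruct T as [|T].
      + rewrite H2 by lia. simpl. ring.
      + rewrite H1 by lia. replace (Nat.min 1 (S T)) with 1%nat by lia. simpl. ring.
    - rewrite tech5, IH. destruct (Nat.lt_ge_cases (S N0) T) as [Hl|Hl].
      + rewrite H1 by lia. replace (Nat.min (S (S N0)) T) with (S (Nat.min (S N0) T)) by lia.
        rewrite S_INR. ring.
      + rewrite H2 by lia. replace (Nat.min (S (S N0)) T) with (Nat.min (S N0) T) by lia. ring. }
  rewrite E. apply Rmult_le_compat_r; auto. apply le_INR. lia.
Qed.

Lemma divmod_lin (M i q : nat) : (i < M)%nat -> ((i + M * q) mod M = i /\ (i + M * q) / M = q)%nat.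
Proof.
  intros H. split.
  - rewrite Nat.mul_comm, Nat.Div0.mod_add. apply Nat.mod_small; auto.
  - rewrite Nat.mul_comm, Nat.add_comm, Nat.div_add_l by lia. rewrite Nat.div_small; lia.
Qed.

Lemma lt_lin (M a q Q : nat) : (a < M)%nat -> (q < Q)%nat -> (a + M * q < M * Q)%nat.
Proof. intros H1 H2. assert (M * q + M <= M * Q)%nat by nia. lia. Qed.

Fixpoint qd (M n k : nat) : nat := match k with O => n | S k' => (qd M n k' / M)%nat end.

Definition P4 := (R * R * R * R)%type.

Lemma graph_null (K : R -> R -> R -> R -> Prop) (g : R -> R -> R -> R -> R) (N L : R) :
  0 < N -> 0 <= L ->
  (forall a b c d, K a b c d -> Rabs a <= N /\ Rabs b <= N /\ Rabs c <= N /\ Rabs d <= N) ->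
  (forall a b c d a' b' c' d', K a b c d -> K a' b' c' d' ->
     Rabs (g a b c d - g a' b' c' d') <= L * (Rabs (a - a') + Rabs (b - b') + Rabs (c - c') + Rabs (d - d'))) ->
  null5 (fun a b c d e => K a b c d /\ e = g a b c d).
Proof.
  intros HN HL HKb Hg eps Heps.
  destruct (archi (8 * L * (2 * N) ^ 5 / eps)) as [M0 HM0].
  set (M := S M0).
  assert (HMp : 0 < INR M) by (apply lt_0_INR; unfold M; lia).
  assert (HM : 8 * L * (2 * N) ^ 5 / eps < INR M) by (unfold M; rewrite S_INR; lra).
  set (dl := 2 * N / INR M).
  assert (Hdl : 0 < dl) by (unfold dl; apply Rdiv_lt_0_compat; lra).
  set (T := (M * M * M * M)%nat).
  set (cl := fun n k => - N + INR ((qd M n k) mod M) * dl).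
  set (inC := fun n (y : P4) => let '(a, b, c, d) := y in
     cl n 0%nat <= a <= cl n 0%nat + dl /\ cl n 1%nat <= b <= cl n 1%nat + dl /\
     cl n 2%nat <= c <= cl n 2%nat + dl /\ cl n 3%nat <= d <= cl n 3%nat + dl).
  set (ys := fun n => epsilon (inhabits ((0,0,0,0) : P4))
     (fun y : P4 => (let '(a, b, c, d) := y in K a b c d) /\ inC n y)).
  set (gs := fun n => let '(a, b, c, d) := ys n in g a b c d).
  exists (fun n j => if (n <? T)%nat then (if (j <? 4)%nat then cl n j else gs n - 4 * L * dl) else 0).
  exists (fun n j => if (n <? T)%nat then (if (j <? 4)%nat then cl n j + dl else gs n + 4 * L * dl) else 0).
  split; [|split].
  - intros n j. assert (0 <= L * dl) by (apply Rmult_le_pos; lra). destruct (n <? T)%nat; [|lra]. destruct (j <? 4)%nat; lra.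
  - intros a b c d e [HK He].
    destruct (HKb a b c d HK) as [Ha [Hb [Hc Hd]]].
    apply Rabs_le_between in Ha, Hb, Hc, Hd.
    assert (HMdl : INR M * dl = 2 * N) by (unfold dl; field; lra).
    destruct (cell_exists M dl (a + N) Hdl ltac:(unfold M; lia) ltac:(lra)) as [i0 [Hi0 Ci0]].
    destruct (cell_exists M dl (b + N) Hdl ltac:(unfold M; lia) ltac:(lra)) as [i1 [Hi1 Ci1]].
    destruct (cell_exists M dl (c + N) Hdl ltac:(unfold M; lia) ltac:(lra)) as [i2 [Hi2 Ci2]].
    destruct (cell_exists M dl (d + N) Hdl ltac:(unfold M; lia) ltac:(lra)) as [i3 [Hi3 Ci3]].
    set (n := (i0 + M * (i1 + M * (i2 + M * i3)))%nat).
    assert (HnT : (n < T)%nat).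
    { unfold n, T. replace (M * M * M * M)%nat with (M * (M * (M * M)))%nat by ring.
      apply lt_lin; auto. apply lt_lin; auto. apply lt_lin; auto. }
    destruct (divmod_lin M i0 (i1 + M * (i2 + M * i3)) Hi0) as [D0 Q0].
    destruct (divmod_lin M i1 (i2 + M * i3) Hi1) as [D1 Q1].
    destruct (divmod_lin M i2 i3 Hi2) as [D2 Q2].
    assert (D3 : (i3 mod M = i3)%nat) by (apply Nat.mod_small; auto).
    assert (E0 : cl n 0%nat = - N + INR i0 * dl) by (unfold cl; cbn [qd]; unfold n; rewrite D0; auto).
    assert (E1 : cl n 1%nat = - N + INR i1 * dl) by (unfold cl; cbn [qd]; unfold n; rewrite Q0, D1; auto).
    assert (E2 : cl n 2%nat = - N + INR i2 * dl) by (unfold cl; cbn [qd]; unfold n; rewrite Q0, Q1, D2; auto).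
    assert (E3 : cl n 3%nat = - N + INR i3 * dl) by (unfold cl; cbn [qd]; unfold n; rewrite Q0, Q1, Q2, D3; auto).
    rewrite !S_INR in Ci0, Ci1, Ci2, Ci3.
    assert (Hin : inC n (a, b, c, d)) by (unfold inC; rewrite E0, E1, E2, E3; lra).
    assert (Hys : (let '(a, b, c, d) := ys n in K a b c d) /\ inC n (ys n)).
    { unfold ys. apply epsilon_spec. exists (a, b, c, d). split; auto. }
    exists n. apply Nat.ltb_lt in HnT. rewrite HnT. simpl.
    unfold gs. destruct (ys n) as [[[a' b'] c'] d'].
    destruct Hys as [HK' Hin'].
    unfold inC in Hin, Hin'.
    specialize (Hg a b c d a' b' c' d' HK HK').
    assert (Habs : Rabs (a - a') + Rabs (b - b') + Rabs (c - c') + Rabs (d - d') <= 4 * dl).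
    { assert (Rabs (a - a') <= dl) by (apply Rabs_le; lra).
      assert (Rabs (b - b') <= dl) by (apply Rabs_le; lra).
      assert (Rabs (c - c') <= dl) by (apply Rabs_le; lra).
      assert (Rabs (d - d') <= dl) by (apply Rabs_le; lra). lra. }
    assert (Hgg : Rabs (g a b c d - g a' b' c' d') <= 4 * L * dl).
    { eapply Rle_trans; [exact Hg|]. replace (4 * L * dl) with (L * (4 * dl)) by ring.
      apply Rmult_le_compat_l; auto. }
    apply Rabs_le_between in Hgg. lra.
  - intros N'. eapply Rle_trans.
    + apply (sum_count _ T (dl * dl * dl * dl * (8 * L * dl))).
      * clear -Hdl HL. clearbody dl. repeat apply Rmult_le_pos; lra.
      * intros n Hn. apply Nat.ltb_lt in Hn. unfold vol. rewrite Hn. simpl. ring.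
      * intros n Hn. apply Nat.ltb_ge in Hn. unfold vol. rewrite Hn. ring.
    + unfold T. rewrite !mult_INR. unfold dl.
      replace (INR M * INR M * INR M * INR M * (2 * N / INR M * (2 * N / INR M) * (2 * N / INR M) * (2 * N / INR M) * (8 * L * (2 * N / INR M))))
        with (8 * L * (2 * N) ^ 5 / INR M) by (field; lra).
      set (X := 8 * L * (2 * N) ^ 5) in *.
      apply Rmult_lt_compat_r with (r := eps) in HM; [|lra].
      replace (X / eps * eps) with X in HM by (field; lra).
      unfold Rdiv. apply Rmult_le_reg_r with (INR M); auto.
      rewrite Rmult_assoc, Rinv_l by lra. lra.
Qed.

Definition dist4 (a b c d a' b' c' d' : R) :=
  Rabs (a - a') + Rabs (b - b') + Rabs (c - c') + Rabs (d - d').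

Lemma dist4_nonneg a b c d a' b' c' d' : 0 <= dist4 a b c d a' b' c' d'.
Proof. unfold dist4. generalize (Rabs_pos (a - a')) (Rabs_pos (b - b')) (Rabs_pos (c - c')) (Rabs_pos (d - d')). lra. Qed.

Definition LB (K : R -> R -> R -> R -> Prop) (f : R -> R -> R -> R -> R) : Prop :=
  exists M L, 0 <= L /\ (forall a b c d, K a b c d -> Rabs (f a b c d) <= M) /\
    (forall a b c d a' b' c' d', K a b c d -> K a' b' c' d' ->
       Rabs (f a b c d - f a' b' c' d') <= L * dist4 a b c d a' b' c' d').

Section LBcalc.
Variable K : R -> R -> R -> R -> Prop.

Lemma LB_const x : LB K (fun _ _ _ _ => x).
Proof. exists (Rabs x), 0. split; [lra|split]; intros; [lra|]. unfold Rminus. rewrite Rplus_opp_r, Rabs_R0. lra. Qed.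

Lemma LB_v0 N : (forall a b c d, K a b c d -> Rabs a <= N) -> LB K (fun a _ _ _ => a).
Proof. intros H. exists N, 1. split; [lra|split]; auto. intros. unfold dist4.
  generalize (Rabs_pos (b - b')) (Rabs_pos (c - c')) (Rabs_pos (d - d')). lra. Qed.
Lemma LB_v1 N : (forall a b c d, K a b c d -> Rabs b <= N) -> LB K (fun _ b _ _ => b).
Proof. intros H. exists N, 1. split; [lra|split]; auto. intros. unfold dist4.
  generalize (Rabs_pos (a - a')) (Rabs_pos (c - c')) (Rabs_pos (d - d')). lra. Qed.
Lemma LB_v2 N : (forall a b c d, K a b c d -> Rabs c <= N) -> LB K (fun _ _ c _ => c).
Proof. intros H. exists N, 1. split; [lra|split]; auto. intros. unfold dist4.
  generalize (Rabs_pos (b - b')) (Rabs_pos (a - a')) (Rabs_pos (d - d')). lra. Qed.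
Lemma LB_v3 N : (forall a b c d, K a b c d -> Rabs d <= N) -> LB K (fun _ _ _ d => d).
Proof. intros H. exists N, 1. split; [lra|split]; auto. intros. unfold dist4.
  generalize (Rabs_pos (b - b')) (Rabs_pos (c - c')) (Rabs_pos (a - a')). lra. Qed.

Lemma LB_plus f g : LB K f -> LB K g -> LB K (fun a b c d => f a b c d + g a b c d).
Proof.
  intros [M1 [L1 [HL1 [HM1 Hl1]]]] [M2 [L2 [HL2 [HM2 Hl2]]]].
  exists (M1 + M2), (L1 + L2). split; [lra|split].
  - intros. eapply Rle_trans; [apply Rabs_triang|]. generalize (HM1 a b c d H) (HM2 a b c d H). lra.
  - intros. replace (f a b c d + g a b c d - (f a' b' c' d' + g a' b' c' d'))
      with ((f a b c d - f a' b' c' d') + (g a b c d - g a' b' c' d')) by ring.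
    eapply Rle_trans; [apply Rabs_triang|].
    generalize (Hl1 _ _ _ _ _ _ _ _ H H0) (Hl2 _ _ _ _ _ _ _ _ H H0). lra.
Qed.

Lemma LB_opp f : LB K f -> LB K (fun a b c d => - f a b c d).
Proof.
  intros [M1 [L1 [HL1 [HM1 Hl1]]]]. exists M1, L1. split; [lra|split].
  - intros. rewrite Rabs_Ropp. auto.
  - intros. replace (- f a b c d - - f a' b' c' d') with (- (f a b c d - f a' b' c' d')) by ring.
    rewrite Rabs_Ropp. auto.
Qed.

Lemma LB_minus f g : LB K f -> LB K g -> LB K (fun a b c d => f a b c d - g a b c d).
Proof. intros. unfold Rminus. apply LB_plus; auto. apply LB_opp; auto. Qed.

Lemma LB_mult f g : LB K f -> LB K g -> LB K (fun a b c d => f a b c d * g a b c d).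
Proof.
  intros [M1 [L1 [HL1 [HM1 Hl1]]]] [M2 [L2 [HL2 [HM2 Hl2]]]].
  exists (Rabs M1 * Rabs M2), (Rabs M1 * L2 + Rabs M2 * L1). split; [|split].
  - generalize (Rabs_pos M1) (Rabs_pos M2). nra.
  - intros. rewrite Rabs_mult. apply Rmult_le_compat; try apply Rabs_pos.
    + eapply Rle_trans; [apply HM1; auto| apply Rle_abs].
    + eapply Rle_trans; [apply HM2; auto| apply Rle_abs].
  - intros. replace (f a b c d * g a b c d - f a' b' c' d' * g a' b' c' d')
      with (f a b c d * (g a b c d - g a' b' c' d') + g a' b' c' d' * (f a b c d - f a' b' c' d')) by ring.
    eapply Rle_trans; [apply Rabs_triang|]. rewrite !Rabs_mult.
    assert (A1 : Rabs (f a b c d) <= Rabs M1) by (eapply Rle_trans; [apply HM1; auto| apply Rle_abs]).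
    assert (A2 : Rabs (g a' b' c' d') <= Rabs M2) by (eapply Rle_trans; [apply HM2; auto| apply Rle_abs]).
    specialize (Hl1 _ _ _ _ _ _ _ _ H H0). specialize (Hl2 _ _ _ _ _ _ _ _ H H0).
    generalize (dist4_nonneg a b c d a' b' c' d') (Rabs_pos (f a b c d)) (Rabs_pos (g a' b' c' d'))
      (Rabs_pos (g a b c d - g a' b' c' d')) (Rabs_pos (f a b c d - f a' b' c' d')).
    intros. 
    apply Rle_trans with (Rabs M1 * (L2 * dist4 a b c d a' b' c' d') + Rabs M2 * (L1 * dist4 a b c d a' b' c' d')).
    + apply Rplus_le_compat; apply Rmult_le_compat; auto.
    + right; ring.
Qed.

Lemma LB_pow f n : LB K f -> LB K (fun a b c d => f a b c d ^ n).
Proof.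
  intros H. induction n as [|n IH].
  - simpl. apply LB_const.
  - simpl. apply (LB_mult f (fun a b c d => f a b c d ^ n)); auto.
Qed.

Lemma LB_inv f c : 0 < c -> (forall a b c0 d, K a b c0 d -> c <= Rabs (f a b c0 d)) ->
  LB K f -> LB K (fun a b c d => / f a b c d).
Proof.
  intros Hc Hf [M1 [L1 [HL1 [HM1 Hl1]]]].
  exists (/ c), (L1 / (c * c)). split; [|split].
  - apply Rmult_le_pos; auto. left. apply Rinv_0_lt_compat. nra.
  - intros. specialize (Hf _ _ _ _ H). rewrite Rabs_inv. apply Rinv_le_contravar; auto.
  - intros. pose proof (Hf _ _ _ _ H) as F1. pose proof (Hf _ _ _ _ H0) as F2.
    assert (N1 : f a b c0 d <> 0) by (intro E; rewrite E, Rabs_R0 in F1; lra).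
    assert (N2 : f a' b' c' d' <> 0) by (intro E; rewrite E, Rabs_R0 in F2; lra).
    replace (/ f a b c0 d - / f a' b' c' d') with ((f a' b' c' d' - f a b c0 d) * / (f a b c0 d * f a' b' c' d')) by (field; auto).
    rewrite Rabs_mult, Rabs_inv, Rabs_mult, <- Rabs_Ropp, Ropp_minus_distr.
    specialize (Hl1 _ _ _ _ _ _ _ _ H H0).
    apply Rle_trans with (L1 * dist4 a b c0 d a' b' c' d' * / (c * c)).
    + apply Rmult_le_compat; auto; try apply Rabs_pos.
      * left. apply Rinv_0_lt_compat. apply Rmult_lt_0_compat; lra.
      * apply Rinv_le_contravar; [nra|]. apply Rmult_le_compat; lra.
    + right. unfold Rdiv. ring.
Qed.

Lemma LB_div f g : LB K f -> LB K (fun a b c d => / g a b c d) -> LB K (fun a b c d => f a b c d / g a b c d).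
Proof. intros. unfold Rdiv. apply (LB_mult f (fun a b c d => / g a b c d)); auto. Qed.

Lemma sqrt_lip x y c : 0 < c -> c <= x -> c <= y -> Rabs (sqrt x - sqrt y) <= Rabs (x - y) / (2 * sqrt c).
Proof.
  intros Hc Hx Hy.
  assert (Sc : 0 < sqrt c) by (apply sqrt_lt_R0; auto).
  assert (Sx : sqrt c <= sqrt x) by (apply sqrt_le_1_alt; auto).
  assert (Sy : sqrt c <= sqrt y) by (apply sqrt_le_1_alt; auto).
  assert (Ex : sqrt x * sqrt x = x) by (apply sqrt_sqrt; lra).
  assert (Ey : sqrt y * sqrt y = y) by (apply sqrt_sqrt; lra).
  assert (E : (sqrt x - sqrt y) * (sqrt x + sqrt y) = x - y)
    by (transitivity (sqrt x * sqrt x - sqrt y * sqrt y); [ring | rewrite Ex, Ey; ring]).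
  rewrite <- E.
  rewrite Rabs_mult. rewrite (Rabs_pos_eq (sqrt x + sqrt y)) by lra.
  unfold Rdiv. apply Rle_trans with (Rabs (sqrt x - sqrt y) * (sqrt x + sqrt y) * / (sqrt x + sqrt y)).
  - right. field. lra.
  - apply Rmult_le_compat_l; [apply Rmult_le_pos; [apply Rabs_pos|lra]|].
    apply Rinv_le_contravar; lra.
Qed.

Lemma LB_sqrt f c : 0 < c -> (forall a b c0 d, K a b c0 d -> c <= f a b c0 d) ->
  LB K f -> LB K (fun a b c d => sqrt (f a b c d)).
Proof.
  intros Hc Hf [M1 [L1 [HL1 [HM1 Hl1]]]].
  assert (Sc : 0 < sqrt c) by (apply sqrt_lt_R0; auto).
  exists (sqrt (Rabs M1)), (L1 / (2 * sqrt c)). split; [|split].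
  - apply Rmult_le_pos; auto. left. apply Rinv_0_lt_compat. lra.
  - intros. rewrite Rabs_pos_eq by apply sqrt_pos. apply sqrt_le_1_alt.
    eapply Rle_trans; [apply Rle_abs|]. eapply Rle_trans; [apply HM1; auto|apply Rle_abs].
  - intros. eapply Rle_trans; [apply (sqrt_lip _ _ c); auto|].
    unfold Rdiv. apply Rle_trans with (/ (2 * sqrt c) * (L1 * dist4 a b c0 d a' b' c' d')).
    + rewrite Rmult_comm. apply Rmult_le_compat_l; [left; apply Rinv_0_lt_compat; lra|]. auto.
    + right; ring.
Qed.

Lemma atan_lip x y : Rabs (atan x - atan y) <= Rabs (x - y).
Proof.
  destruct (MVT_gen atan y x (fun t => / (1 + t ^ 2))) as [c [_ Hc]].
  - intros t _. replace (t ^ 2) with (t²) by (unfold Rsqr; ring). apply is_derive_atan.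
  - intros t _. apply continuity_pt_filterlim. refine (ex_derive_continuous atan t _). eexists. apply is_derive_atan.
  - rewrite Hc, Rabs_mult. rewrite <- (Rmult_1_l (Rabs (x - y))) at 2.
    apply Rmult_le_compat_r; [apply Rabs_pos|].
    assert (0 <= c ^ 2) by apply pow2_ge_0.
    rewrite Rabs_pos_eq by (left; apply Rinv_0_lt_compat; lra).
    rewrite <- Rinv_1. apply Rinv_le_contravar; lra.
Qed.

Lemma LB_atan f : LB K f -> LB K (fun a b c d => atan (f a b c d)).
Proof.
  intros [M1 [L1 [HL1 [HM1 Hl1]]]]. exists (PI / 2), L1. split; auto. split.
  - intros. apply Rabs_le. generalize (atan_bound (f a b c d)). lra.
  - intros. eapply Rle_trans; [apply atan_lip|]. auto.
Qed.

End LBcalc.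

Lemma graph_seq (K : nat -> R -> R -> R -> R -> Prop) (g : nat -> R -> R -> R -> R -> R) :
  (forall n, exists N, 0 < N /\ (forall a b c d, K n a b c d -> Rabs a <= N /\ Rabs b <= N /\ Rabs c <= N /\ Rabs d <= N)) ->
  (forall n, LB (K n) (g n)) ->
  null5 (fun a b c d e => exists n, K n a b c d /\ e = g n a b c d).
Proof.
  intros HB HL. apply null5_seq. intros n.
  destruct (HB n) as [N [HN HNb]]. destruct (HL n) as [M [L [HL0 [_ Hl]]]].
  apply (graph_null (K n) (g n) N L); auto.
Qed.

Lemma null5_union2 (S T : R -> R -> R -> R -> R -> Prop) :
  null5 S -> null5 T -> null5 (fun a b c d e => S a b c d e \/ T a b c d e).
Proof.
  intros HS HT.
  apply null5_mono with (T := fun a b c d e => exists m : nat, (if Nat.eqb m 0 then S else T) a b c d e).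
  - intros a b c d e [H|H]; [exists 0%nat; exact H| exists 1%nat; exact H].
  - apply null5_seq. intros m. destruct (Nat.eqb m 0); auto.
Qed.

Lemma pick6 u1 u2 u3 u4 u5 u6 : 0 <= u1 -> 0 <= u2 -> 0 <= u3 -> 0 <= u4 -> 0 <= u5 -> 0 <= u6 ->
  exists n : nat, u1 < INR n + 1 /\ u2 < INR n + 1 /\ u3 < INR n + 1 /\ u4 < INR n + 1 /\ u5 < INR n + 1 /\ u6 < INR n + 1.
Proof.
  intros. destruct (archi (u1 + u2 + u3 + u4 + u5 + u6)) as [n Hn]. exists n. lra.
Qed.

Lemma inv_lt_le x n : 0 < x -> / x < INR n + 1 -> / (INR n + 1) <= x.
Proof.
  intros Hx H. assert (0 <= INR n) by apply pos_INR.
  replace x with (/ / x) by (field; lra). apply Rinv_le_contravar; [apply Rinv_0_lt_compat; lra| lra].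
Qed.

Lemma trig_sol A B x : A <> 0 -> - A * sin x + B * cos x = 0 -> exists m : Z, x = atan (B / A) + IZR m * PI.
Proof.
  intros HA H.
  assert (Hc : cos x <> 0).
  { intro Hc. rewrite Hc in H. assert (Hs : sin x ^ 2 = 1) by (generalize (sin2_cos2 x); rewrite Hc; unfold Rsqr; simpl; lra).
    assert (sin x = 0) by (apply Rmult_integral in H as [H|H]; [nra| lra] || nra).
    rewrite H0 in Hs. simpl in Hs. lra. }
  set (a := atan (B / A)).
  assert (Ha : 0 < cos a) by (apply cos_gt_0; generalize (atan_bound (B / A)); fold a; lra).
  assert (Ta : sin a = B / A * cos a).
  { rewrite <- (tan_atan (B / A)). fold a. unfold tan. field. lra. }
  assert (Sx : sin x = B / A * cos x) by (field_simplify; [|auto]; apply Rmult_eq_reg_l with A; [|auto]; field_simplify; lra).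
  assert (E : sin (x - a) = 0) by (rewrite sin_minus, Ta, Sx; ring).
  destruct (sin_eq_0_0 _ E) as [m Hm]. exists m. lra.
Qed.

Lemma IZR_split (m : Z) : exists j : nat, IZR m = INR j \/ IZR m = - INR j.
Proof.
  destruct (Z_le_gt_dec 0 m) as [H|H].
  - exists (Z.to_nat m). left. rewrite INR_IZR_INZ, Z2Nat.id; auto.
  - exists (Z.to_nat (- m)). right. rewrite INR_IZR_INZ, Z2Nat.id by lia. rewrite opp_IZR. ring.
Qed.

Definition box (n : nat) (a b c d : R) : Prop :=
  Rabs a <= INR n + 1 /\ Rabs b <= INR n + 1 /\ Rabs c <= INR n + 1 /\ Rabs d <= INR n + 1.

Lemma box_bound n : exists N, 0 < N /\ (forall a b c d, (box n a b c d) -> Rabs a <= N /\ Rabs b <= N /\ Rabs c <= N /\ Rabs d <= N).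
Proof. exists (INR n + 1). split; [generalize (pos_INR n); lra| auto]. Qed.

Ltac lbt := repeat first [ assumption | apply LB_plus | apply LB_minus | apply LB_div | apply LB_mult | apply LB_opp
  | apply LB_pow | apply LB_atan | apply LB_const ].

Ltac vars K n hK :=
  let h0 := fresh "hv" in let h1 := fresh "hv" in let h2 := fresh "hv" in let h3 := fresh "hv" in
  assert (h0 : LB K (fun a _ _ _ => a)) by (apply (LB_v0 _ (INR n + 1)); intros a b c d HH; apply hK in HH; unfold box in HH; tauto);
  assert (h1 : LB K (fun _ b _ _ => b)) by (apply (LB_v1 _ (INR n + 1)); intros a b c d HH; apply hK in HH; unfold box in HH; tauto);
  assert (h2 : LB K (fun _ _ c _ => c)) by (apply (LB_v2 _ (INR n + 1)); intros a b c d HH; apply hK in HH; unfold box in HH; tauto);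
  assert (h3 : LB K (fun _ _ _ d => d)) by (apply (LB_v3 _ (INR n + 1)); intros a b c d HH; apply hK in HH; unfold box in HH; tauto).

Lemma Rabs_inv_ge n x : / (INR n + 1) <= x -> / (INR n + 1) <= Rabs x.
Proof. intros. rewrite Rabs_pos_eq; auto. generalize (pos_INR n). intros. assert (0 < / (INR n + 1)) by (apply Rinv_0_lt_compat; lra). lra. Qed.

Lemma inv_pos n : 0 < / (INR n + 1).
Proof. apply Rinv_0_lt_compat. generalize (pos_INR n); lra. Qed.

Lemma null_A : null5 (fun r th z pR pS => 0 < r /\ A_coef r z pR pS = 0 /\ pR <> 0).
Proof.
  apply null5_swap24.
  set (Kn := fun n r th pS pR => / (INR n + 1) <= r /\ box n r th pS pR /\
                 / (INR n + 1) <= Rabs (pS * pS / (r * r) - pR * pR)).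
  apply null5_mono with (T := fun a b c d e => exists n, Kn n a b c d /\ e = (fun r th pS pR => - (pR * pS * r) / (2 * (pS * pS / (r * r) - pR * pR))) a b c d).
  - intros r th pS pR z [Hr [HA HpR]].
    unfold A_coef in HA.
    set (c := pS * pS / (r * r) - pR * pR).
    assert (EA : pR * pS * r - 2 * pR ^ 2 * z + 2 * pS ^ 2 * z / r ^ 2 = pR * pS * r + 2 * z * c) by (unfold c; field; lra).
    assert (Hc : c <> 0).
    { intro Hc. rewrite EA, Hc in HA.
      assert (E : pR * pS * r = 0) by lra.
      assert (pS = 0) by (apply Rmult_integral in E as [E|E]; [apply Rmult_integral in E as [E|E]; [contradiction|auto]| lra]).
      subst pS. apply HpR. unfold c in Hc. assert (pR * pR = 0) by (unfold Rdiv in Hc; lra). nra. }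
    destruct (pick6 (/ r) (Rabs r) (Rabs th) (Rabs pS) (Rabs pR) (/ Rabs c)) as [n Hn];
      try apply Rabs_pos; try (left; apply Rinv_0_lt_compat; auto; apply Rabs_pos_lt; auto).
    exists n. split.
    + unfold Kn, box. fold c. repeat split; try lra.
      * apply inv_lt_le; tauto.
      * apply inv_lt_le; [apply Rabs_pos_lt; auto| tauto].
    + fold c. rewrite EA in HA. assert (H : 2 * z * c = - (pR * pS * r)) by lra.
      rewrite <- H. field. auto.
  - apply graph_seq.
    + intros n. destruct (box_bound n) as [N [HN HB]]. exists N. split; auto. intros. apply HB. apply H.
    + intros n. set (K := Kn n).
      assert (hK : forall a b c d, K a b c d -> box n a b c d) by (unfold K, Kn; tauto).
      vars K n hK.
      assert (hr : LB K (fun a _ _ _ => / (a * a))).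
      { apply (LB_inv _ _ (/ (INR n + 1) * / (INR n + 1))).
        - generalize (inv_pos n); nra.
        - intros. unfold K, Kn in H. rewrite Rabs_mult. generalize (inv_pos n). intros.
          apply Rmult_le_compat; try lra; apply Rabs_inv_ge; tauto.
        - lbt. }
      assert (hc : LB K (fun a _ c d => / (2 * (c * c / (a * a) - d * d)))).
      { apply (LB_inv _ _ (2 * / (INR n + 1))).
        - generalize (inv_pos n); lra.
        - intros. unfold K, Kn in H. rewrite Rabs_mult, (Rabs_pos_eq 2) by lra. lra.
        - lbt. }
      lbt.
Qed.

Lemma null_hyp4 : null5 (fun a b c d e => e = 0).
Proof.
  apply null5_mono with (T := fun a b c d e => exists n, box n a b c d /\ e = (fun _ _ _ _ => 0) a b c d).
  - intros a b c d e He.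
    destruct (pick6 (Rabs a) (Rabs b) (Rabs c) (Rabs d) 0 0) as [n Hn]; try apply Rabs_pos; try lra.
    exists n. unfold box. split; [repeat split; lra| auto].
  - apply graph_seq.
    + intros n. apply box_bound.
    + intros n. apply LB_const.
Qed.

Lemma null_pR0 : null5 (fun r th z pR pS => pR = 0).
Proof. apply null5_swap34. apply null_hyp4. Qed.

Lemma null_z0 : null5 (fun r th z pR pS => z = 0).
Proof. apply null5_swap24. apply null_hyp4. Qed.

Lemma sqrt_rho_ge r z : 0 < r -> r ^ 2 <= sqrt (r ^ 4 + 16 * z ^ 2).
Proof.
  intros Hr. rewrite <- (sqrt_pow2 (r ^ 2)) by (apply pow_le; lra).
  apply sqrt_le_1_alt. generalize (pow2_ge_0 z). intros. replace ((r ^ 2) ^ 2) with (r ^ 4) by ring. lra.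
Qed.

Lemma null_H k : 0 < k -> null5 (fun r th z pR pS => 0 < r /\ Ham k r th z pR pS = 0 /\ pR <> 0).
Proof.
  intros Hk. apply null5_swap34.
  set (Q := fun r z pS => 2 * k / sqrt (r ^ 4 + 16 * z ^ 2) - pS * pS / (r * r)).
  set (Kn := fun n r th z pS => / (INR n + 1) <= r /\ box n r th z pS /\ / (INR n + 1) <= Q r z pS).
  apply null5_mono with (T := fun a b c d e =>
     (exists n, Kn n a b c d /\ e = (fun r th z pS => sqrt (Q r z pS)) a b c d) \/
     (exists n, Kn n a b c d /\ e = (fun r th z pS => - sqrt (Q r z pS)) a b c d)).
  - intros r th z pS pR [Hr [HH HpR]].
    unfold Ham, rho in HH.
    assert (HS : 0 < sqrt (r ^ 4 + 16 * z ^ 2)) by (apply sqrt_lt_R0; generalize (pow_lt r 4 Hr) (pow2_ge_0 z); lra).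
    assert (EQ : Q r z pS = pR * pR).
    { unfold Q. assert (E1 : k / sqrt (r ^ 4 + 16 * z ^ 2) = / 2 * (pR ^ 2 + pS ^ 2 / r ^ 2)) by lra.
      replace (2 * k / sqrt (r ^ 4 + 16 * z ^ 2)) with (2 * (k / sqrt (r ^ 4 + 16 * z ^ 2))) by (unfold Rdiv; ring).
      rewrite E1. field. lra. }
    assert (HQ : 0 < Q r z pS) by (rewrite EQ; nra).
    destruct (pick6 (/ r) (Rabs r) (Rabs th) (Rabs z) (Rabs pS) (/ Q r z pS)) as [n Hn];
      try apply Rabs_pos; try (left; apply Rinv_0_lt_compat; auto).
    assert (HK : Kn n r th z pS).
    { unfold Kn, box. repeat split; try lra; apply inv_lt_le; tauto. }
    destruct (Rlt_or_le 0 pR) as [Hp|Hp].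
    + left. exists n. split; auto. rewrite EQ. rewrite sqrt_square; lra.
    + right. exists n. split; auto. rewrite EQ. replace (pR * pR) with ((- pR) * (- pR)) by ring.
      rewrite sqrt_square; lra.
  - assert (LQ : forall n, LB (Kn n) (fun r th z pS => sqrt (Q r z pS))).
    { intros n. set (K := Kn n).
      assert (hK : forall a b c d, K a b c d -> box n a b c d) by (unfold K, Kn; tauto).
      vars K n hK.
      assert (hr : LB K (fun a _ _ _ => / (a * a))).
      { apply (LB_inv _ _ (/ (INR n + 1) * / (INR n + 1))).
        - generalize (inv_pos n); nra.
        - intros. unfold K, Kn in H. rewrite Rabs_mult. generalize (inv_pos n). intros.
          apply Rmult_le_compat; try lra; apply Rabs_inv_ge; tauto.
        - lbt. }
      assert (hs : LB K (fun a _ c _ => sqrt (a ^ 4 + 16 * c ^ 2))).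
      { apply (LB_sqrt _ _ ((/ (INR n + 1)) ^ 4)).
        - apply pow_lt. apply inv_pos.
        - intros a b c d H. unfold K, Kn in H. generalize (pow2_ge_0 c) (inv_pos n). intros.
          assert ((/ (INR n + 1)) ^ 4 <= a ^ 4) by (apply pow_incr; lra). lra.
        - lbt. }
      assert (hsi : LB K (fun a _ c _ => / sqrt (a ^ 4 + 16 * c ^ 2))).
      { apply (LB_inv _ _ ((/ (INR n + 1)) ^ 2)).
        - apply pow_lt. apply inv_pos.
        - intros a b c d H. unfold K, Kn in H. generalize (inv_pos n). intros.
          assert ((/ (INR n + 1)) ^ 2 <= a ^ 2) by (apply pow_incr; lra).
          assert (0 < a) by lra.
          generalize (sqrt_rho_ge a c H2). intros. rewrite Rabs_pos_eq by apply sqrt_pos. lra.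
        - exact hs. }
      apply (LB_sqrt _ _ (/ (INR n + 1))).
      - apply inv_pos.
      - intros. unfold K, Kn in H. tauto.
      - unfold Q. lbt. }
    apply null5_union2.
    + apply graph_seq; [intros n; destruct (box_bound n) as [N [HN HB]]; exists N; split; auto; intros; apply HB; apply H|].
      apply LQ.
    + apply graph_seq; [intros n; destruct (box_bound n) as [N [HN HB]]; exists N; split; auto; intros; apply HB; apply H|].
      intros n. apply LB_opp. apply LQ.
Qed.

Lemma null_theta k (ph : R) (P : R -> R -> R -> R -> R -> Prop) : 0 < k ->
  (forall r th z pR pS, 0 < r -> A_coef r z pR pS <> 0 -> P r th z pR pS ->
     exists m : Z, th = ph + atan (B_coef k r z pR pS / A_coef r z pR pS) / 2 + IZR m * (PI / 2)) ->
  null5 (fun r th z pR pS => 0 < r /\ A_coef r z pR pS <> 0 /\ P r th z pR pS).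
Proof.
  intros Hk HP. apply null5_swap14.
  set (Kn := fun n r pS z pR => / (INR n + 1) <= r /\ box n r pS z pR /\ / (INR n + 1) <= Rabs (A_coef r z pR pS)).
  set (G := fun r pS z pR => ph + atan (B_coef k r z pR pS / A_coef r z pR pS) / 2).
  apply null5_mono with (T := fun a b c d e =>
     (exists j : nat, exists n, Kn n a b c d /\ e = (fun r pS z pR => G r pS z pR + INR j * (PI / 2)) a b c d) \/
     (exists j : nat, exists n, Kn n a b c d /\ e = (fun r pS z pR => G r pS z pR - INR j * (PI / 2)) a b c d)).
  - intros r pS z pR th [Hr [HA HPP]].
    destruct (HP r th z pR pS Hr HA HPP) as [m Hm].
    destruct (pick6 (/ r) (Rabs r) (Rabs pS) (Rabs z) (Rabs pR) (/ Rabs (A_coef r z pR pS))) as [n Hn];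
      try apply Rabs_pos; try (left; apply Rinv_0_lt_compat; auto; apply Rabs_pos_lt; auto).
    assert (HK : Kn n r pS z pR).
    { unfold Kn, box. repeat split; try lra.
      - apply inv_lt_le; tauto.
      - apply inv_lt_le; [apply Rabs_pos_lt; auto| tauto]. }
    destruct (IZR_split m) as [j [Hj|Hj]]; rewrite Hj in Hm.
    + left. exists j, n. split; [exact HK|]. cbv beta. unfold G. rewrite Hm. ring.
    + right. exists j, n. split; [exact HK|]. cbv beta. unfold G. rewrite Hm. ring.
  - assert (LG : forall n, LB (Kn n) G).
    { intros n. set (K := Kn n).
      assert (hK : forall a b c d, K a b c d -> box n a b c d) by (unfold K, Kn; tauto).
      vars K n hK.
      assert (hr1 : LB K (fun a _ _ _ => / a)).
      { apply (LB_inv _ _ (/ (INR n + 1))).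
        - apply inv_pos.
        - intros a b c d H. unfold K, Kn in H. apply Rabs_inv_ge; tauto.
        - exact hv. }
      assert (hr : LB K (fun a _ _ _ => / a ^ 2)).
      { apply (LB_inv _ _ (/ (INR n + 1) * / (INR n + 1))).
        - generalize (inv_pos n); nra.
        - intros a b c d H. unfold K, Kn in H. simpl. rewrite Rmult_1_r, Rabs_mult. generalize (inv_pos n). intros.
          apply Rmult_le_compat; try lra; apply Rabs_inv_ge; tauto.
        - lbt. }
      assert (hs : LB K (fun a _ c _ => sqrt (a ^ 4 + 16 * c ^ 2))).
      { apply (LB_sqrt _ _ ((/ (INR n + 1)) ^ 4)).
        - apply pow_lt. apply inv_pos.
        - intros a b c d H. unfold K, Kn in H. generalize (pow2_ge_0 c) (inv_pos n). intros.
          assert ((/ (INR n + 1)) ^ 4 <= a ^ 4) by (apply pow_incr; lra). lra.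
        - lbt. }
      assert (hsi : LB K (fun a _ c _ => / sqrt (a ^ 4 + 16 * c ^ 2))).
      { apply (LB_inv _ _ ((/ (INR n + 1)) ^ 2)).
        - apply pow_lt. apply inv_pos.
        - intros a b c d H. unfold K, Kn in H. generalize (inv_pos n). intros.
          assert ((/ (INR n + 1)) ^ 2 <= a ^ 2) by (apply pow_incr; lra).
          assert (0 < a) by lra.
          generalize (sqrt_rho_ge a c H2). intros. rewrite Rabs_pos_eq by apply sqrt_pos. lra.
        - exact hs. }
      assert (hA : LB K (fun a b c d => / A_coef a c d b)).
      { apply (LB_inv _ _ (/ (INR n + 1))).
        - apply inv_pos.
        - intros a b c d H. unfold K, Kn in H. tauto.
        - unfold A_coef. lbt. }
      unfold G, B_coef, rho. lbt. }
    apply null5_union2; apply null5_seq; intros j.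
    + apply graph_seq; [intros n; destruct (box_bound n) as [N [HN HB]]; exists N; split; auto; intros; apply HB; apply H|].
      intros n. apply LB_plus; [apply LG| apply LB_const].
    + apply graph_seq; [intros n; destruct (box_bound n) as [N [HN HB]]; exists N; split; auto; intros; apply HB; apply H|].
      intros n. apply LB_minus; [apply LG| apply LB_const].
Qed.

Lemma null_F2 k : 0 < k -> null5 (fun r th z pR pS => 0 < r /\ A_coef r z pR pS <> 0 /\ F2 k r th z pR pS = 0).
Proof.
  intros Hk. apply (null_theta k 0); auto.
  intros r th z pR pS Hr HA HF. unfold F2 in HF.
  destruct (trig_sol _ _ _ HA HF) as [m Hm]. exists m. lra.
Qed.

Lemma null_F1 k : 0 < k -> null5 (fun r th z pR pS => 0 < r /\ A_coef r z pR pS <> 0 /\ F1 k r th z pR pS = 0).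
Proof.
  intros Hk. apply (null_theta k (PI / 4)); auto.
  intros r th z pR pS Hr HA HF. unfold F1 in HF.
  assert (HF' : - A_coef r z pR pS * sin (2 * th - PI / 2) + B_coef k r z pR pS * cos (2 * th - PI / 2) = 0).
  { rewrite sin_minus, cos_minus, sin_PI2, cos_PI2. lra. }
  destruct (trig_sol _ _ _ HA HF') as [m Hm]. exists m. lra.
Qed.

Section Partials.
Variables (k r th z pR pS : R).
Hypothesis Hr : 0 < r.

Let Hrho : 0 < r ^ 4 + 16 * z ^ 2.
Proof. generalize (pow_lt r 4 Hr) (pow2_ge_0 z). lra. Qed.

Ltac dtac := apply is_derive_unique; unfold Ham, F1, F2, F3, A_coef, B_coef, rho; auto_derive;
  repeat split; try (apply Rgt_not_eq; apply Rlt_gt; nra);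
  try replace (r * (r * (r * (r * 1))) + 16 * (z * (z * 1))) with (r ^ 4 + 16 * z ^ 2) by ring;
  try (field; repeat split; try lra; apply Rgt_not_eq; apply sqrt_lt_R0; lra); try ring.

Definition cA := pS * r - 4 * pR * z.
Definition cB := 4 * pS * z / r.
Definition sA := pR * r + 4 * pS * z / r ^ 2.
Definition sB := 4 * pR * z / r - 2 * pS.

Lemma dH_th : d_th (Ham k) r th z pR pS = 0.
Proof. unfold d_th. dtac. Qed.
Lemma dH_R : d_pR (Ham k) r th z pR pS = pR.
Proof. unfold d_pR. dtac. Qed.
Lemma dH_S : d_pS (Ham k) r th z pR pS = pS / r ^ 2.
Proof. unfold d_pS. dtac. Qed.
Lemma dF3_th : d_th (F3 k) r th z pR pS = 0.
Proof. unfold d_th. dtac. Qed.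
Lemma dF3_R : d_pR (F3 k) r th z pR pS = 4 * z * (2 * z * pR - r * pS).
Proof. unfold d_pR. dtac. Qed.
Lemma dF3_S : d_pS (F3 k) r th z pR pS = -2 * r * (2 * z * pR - r * pS) + 8 * z ^ 2 * pS / r ^ 2.
Proof. unfold d_pS. dtac. Qed.
Lemma dF1_th : d_th (F1 k) r th z pR pS = 2 * F2 k r th z pR pS.
Proof. unfold d_th. dtac. Qed.
Lemma dF2_th : d_th (F2 k) r th z pR pS = -2 * F1 k r th z pR pS.
Proof. unfold d_th. dtac. Qed.
Lemma dF1_R : d_pR (F1 k) r th z pR pS = cos (2 * th) * cA + sin (2 * th) * cB.
Proof. unfold d_pR, cA, cB. dtac. Qed.
Lemma dF1_S : d_pS (F1 k) r th z pR pS = cos (2 * th) * sA + sin (2 * th) * sB.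
Proof. unfold d_pS, sA, sB. dtac. Qed.
Lemma dF2_R : d_pR (F2 k) r th z pR pS = - sin (2 * th) * cA + cos (2 * th) * cB.
Proof. unfold d_pR, cA, cB. dtac. Qed.
Lemma dF2_S : d_pS (F2 k) r th z pR pS = - sin (2 * th) * sA + cos (2 * th) * sB.
Proof. unfold d_pS, sA, sB. dtac. Qed.
End Partials.

Lemma lin3 a b c u1 u2 u3 v1 v2 v3 w1 w2 w3 :
  u1 * (v2 * w3 - v3 * w2) - v1 * (u2 * w3 - u3 * w2) + w1 * (u2 * v3 - u3 * v2) <> 0 ->
  a * u1 + b * v1 + c * w1 = 0 -> a * u2 + b * v2 + c * w2 = 0 -> a * u3 + b * v3 + c * w3 = 0 ->
  a = 0 /\ b = 0 /\ c = 0.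
Proof.
  intros HD E1 E2 E3.
  set (D := u1 * (v2 * w3 - v3 * w2) - v1 * (u2 * w3 - u3 * w2) + w1 * (u2 * v3 - u3 * v2)) in *.
  assert (Ha : a * D = (a * u1 + b * v1 + c * w1) * (v2 * w3 - v3 * w2) + (a * u2 + b * v2 + c * w2) * (v3 * w1 - v1 * w3) + (a * u3 + b * v3 + c * w3) * (v1 * w2 - v2 * w1)) by (unfold D; ring).
  assert (Hb : b * D = (a * u1 + b * v1 + c * w1) * (w2 * u3 - w3 * u2) + (a * u2 + b * v2 + c * w2) * (w3 * u1 - w1 * u3) + (a * u3 + b * v3 + c * w3) * (w1 * u2 - w2 * u1)) by (unfold D; ring).
  assert (Hc : c * D = (a * u1 + b * v1 + c * w1) * (u2 * v3 - u3 * v2) + (a * u2 + b * v2 + c * w2) * (u3 * v1 - u1 * v3) + (a * u3 + b * v3 + c * w3) * (u1 * v2 - u2 * v1)) by (unfold D; ring).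
  rewrite E1, E2, E3, !Rmult_0_l, !Rplus_0_r in Ha, Hb, Hc.
  repeat split.
  - apply Rmult_integral in Ha as [Ha|Ha]; [auto| lra || (exfalso; apply HD; lra)].
  - apply Rmult_integral in Hb as [Hb|Hb]; [auto| lra || (exfalso; apply HD; lra)].
  - apply Rmult_integral in Hc as [Hc|Hc]; [auto| lra || (exfalso; apply HD; lra)].
Qed.

Ltac rw lem k r th z pR pS Hr := try first [rewrite (lem k r th z pR pS Hr) in * | rewrite (lem k r th z pR pS) in *].

Ltac rwall k r th z pR pS Hr :=
  rw dH_th k r th z pR pS Hr; rw dH_R k r th z pR pS Hr; rw dH_S k r th z pR pS Hr;
  rw dF3_th k r th z pR pS Hr; rw dF3_R k r th z pR pS Hr; rw dF3_S k r th z pR pS Hr;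
  rw dF1_th k r th z pR pS Hr; rw dF1_R k r th z pR pS Hr; rw dF1_S k r th z pR pS Hr;
  rw dF2_th k r th z pR pS Hr; rw dF2_R k r th z pR pS Hr; rw dF2_S k r th z pR pS Hr.

Lemma key13 r z pR pS : 0 < r ->
  pR * (-2 * r * (2 * z * pR - r * pS) + 8 * z ^ 2 * pS / r ^ 2) - pS / r ^ 2 * (4 * z * (2 * z * pR - r * pS))
  = 2 * r * A_coef r z pR pS.
Proof. intros. unfold A_coef. field. lra. Qed.

Lemma indep_T1 k r th z pR pS : 0 < r -> A_coef r z pR pS <> 0 -> F2 k r th z pR pS <> 0 ->
  indep_at (Ham k) (F1 k) (F3 k) r th z pR pS.
Proof.
  intros Hr HA HF a b c _ Eth _ ER ES.
  rwall k r th z pR pS Hr.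
  refine (lin3 a b c _ _ _ _ _ _ _ _ _ _ Eth ER ES).
  replace (0 * _ - _ + 0 * _) with (- (2 * F2 k r th z pR pS) * (pR * (-2 * r * (2 * z * pR - r * pS) + 8 * z ^ 2 * pS / r ^ 2) - pS / r ^ 2 * (4 * z * (2 * z * pR - r * pS)))) by ring.
  rewrite key13 by auto.
  intro E. apply Rmult_integral in E as [E|E]; [apply HF; lra|].
  apply Rmult_integral in E as [E|E]; [lra| auto].
Qed.

Lemma indep_T2 k r th z pR pS : 0 < r -> A_coef r z pR pS <> 0 -> F1 k r th z pR pS <> 0 ->
  indep_at (Ham k) (F2 k) (F3 k) r th z pR pS.
Proof.
  intros Hr HA HF a b c _ Eth _ ER ES.
  rwall k r th z pR pS Hr.
  refine (lin3 a b c _ _ _ _ _ _ _ _ _ _ Eth ER ES).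
  replace (0 * _ - _ + 0 * _) with (- (-2 * F1 k r th z pR pS) * (pR * (-2 * r * (2 * z * pR - r * pS) + 8 * z ^ 2 * pS / r ^ 2) - pS / r ^ 2 * (4 * z * (2 * z * pR - r * pS)))) by ring.
  rewrite key13 by auto.
  intro E. apply Rmult_integral in E as [E|E]; [apply HF; lra|].
  apply Rmult_integral in E as [E|E]; [lra| auto].
Qed.

Lemma cs1 th : cos (2 * th) ^ 2 + sin (2 * th) ^ 2 = 1.
Proof. generalize (sin2_cos2 (2 * th)). unfold Rsqr. intros. simpl. lra. Qed.

Lemma sqrt_rho_pos r z : 0 < r -> 0 < sqrt (rho r z).
Proof. intros. apply sqrt_lt_R0. unfold rho. generalize (pow_lt r 4 H) (pow2_ge_0 z). lra. Qed.

Lemma indep_T3 k r th z pR pS : 0 < r -> A_coef r z pR pS <> 0 -> Ham k r th z pR pS <> 0 ->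
  indep_at (Ham k) (F1 k) (F2 k) r th z pR pS.
Proof.
  intros Hr HA HH a b c _ Eth _ ER ES.
  rwall k r th z pR pS Hr.
  refine (lin3 a b c _ _ _ _ _ _ _ _ _ _ Eth ER ES).
  set (C := cos (2 * th)). set (S := sin (2 * th)).
  assert (CS : C ^ 2 + S ^ 2 = 1) by apply cs1.
  set (Y := -2 * pR * (A_coef r z pR pS * sA r z pR pS + B_coef k r z pR pS * sB r z pR pS)
            + 2 * (pS / r ^ 2) * (A_coef r z pR pS * cA r z pR pS + B_coef k r z pR pS * cB r z pS)).
  assert (E1 : forall X, X = (C ^ 2 + S ^ 2) * Y -> X = Y) by (intros X HX; rewrite HX, CS; ring).
  match goal with |- ?X <> 0 => assert (EX : X = Y) end.
  { apply E1. unfold F1, F2. fold C S. unfold Y. ring. }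
  rewrite EX. unfold Y.
  assert (Hs := sqrt_rho_pos r z Hr).
  replace (-2 * pR * (A_coef r z pR pS * sA r z pR pS + B_coef k r z pR pS * sB r z pR pS) +
   2 * (pS / r ^ 2) * (A_coef r z pR pS * cA r z pR pS + B_coef k r z pR pS * cB r z pS))
   with (-4 * r * Ham k r th z pR pS * A_coef r z pR pS)
   by (unfold Ham, A_coef, B_coef, sA, sB, cA, cB; field; split; lra).
  intro E. apply Rmult_integral in E as [E|E]; [|auto].
  apply Rmult_integral in E as [E|E]; [|auto]. lra.
Qed.

Lemma indep_T4 k r th z pR pS : 0 < k -> 0 < r -> A_coef r z pR pS <> 0 -> z <> 0 ->
  indep_at (F1 k) (F2 k) (F3 k) r th z pR pS.
Proof.
  intros Hk Hr HA Hz a b c _ Eth _ ER ES.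
  rwall k r th z pR pS Hr.
  refine (lin3 a b c _ _ _ _ _ _ _ _ _ _ Eth ER ES).
  set (C := cos (2 * th)). set (S := sin (2 * th)).
  assert (CS : C ^ 2 + S ^ 2 = 1) by apply cs1.
  set (F3R := 4 * z * (2 * z * pR - r * pS)).
  set (F3S := -2 * r * (2 * z * pR - r * pS) + 8 * z ^ 2 * pS / r ^ 2).
  set (Z := 2 * (A_coef r z pR pS * cA r z pR pS + B_coef k r z pR pS * cB r z pS) * F3S
            - 2 * (A_coef r z pR pS * sA r z pR pS + B_coef k r z pR pS * sB r z pR pS) * F3R).
  assert (E1 : forall X, X = (C ^ 2 + S ^ 2) * Z -> X = Z) by (intros X HX; rewrite HX, CS; ring).
  match goal with |- ?X <> 0 => assert (EX : X = Z) end.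
  { apply E1. unfold F1, F2. fold C S. unfold Z. ring. }
  rewrite EX. unfold Z.
  assert (Hs := sqrt_rho_pos r z Hr).
  replace (2 * (A_coef r z pR pS * cA r z pR pS + B_coef k r z pR pS * cB r z pS) * F3S
            - 2 * (A_coef r z pR pS * sA r z pR pS + B_coef k r z pR pS * sB r z pR pS) * F3R)
   with (4 * r * A_coef r z pR pS * F3 k r th z pR pS)
   by (unfold F3S, F3R, F3, A_coef, B_coef, sA, sB, cA, cB; field; split; lra).
  assert (HF3 : 0 < F3 k r th z pR pS).
  { unfold F3. assert (0 < z ^ 2) by (apply pow2_gt_0; auto). 
    assert (0 <= pS ^ 2 / r ^ 2) by (apply Rmult_le_pos; [apply pow2_ge_0| left; apply Rinv_0_lt_compat; apply pow_lt; auto]).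
    assert (0 < 2 * k / sqrt (rho r z)) by (apply Rdiv_lt_0_compat; lra).
    generalize (pow2_ge_0 (2 * z * pR - r * pS)). nra. }
  intro E. apply Rmult_integral in E as [E|E]; [|lra].
  apply Rmult_integral in E as [E|E]; [|auto]. lra.
Qed.

Lemma null_bad3 (P : R -> R -> R -> R -> R -> Prop) : null5 P ->
  null5 (fun r th z pR pS => (0 < r /\ A_coef r z pR pS = 0 /\ pR <> 0) \/ pR = 0 \/ P r th z pR pS).
Proof.
  intros HP. apply null5_union2; [apply null_A|]. apply null5_union2; [apply null_pR0| exact HP].
Qed.

Ltac cases_bad := 
  match goal with |- _ -> _ => idtac end.

Lemma ae1 k : 0 < k -> indep_ae (Ham k) (F1 k) (F3 k).
Proof.
  intros Hk. unfold indep_ae.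
  eapply null5_mono; [| apply (null_bad3 _ (null_F2 k Hk))].
  intros r th z pR pS [Hr Hn]. simpl.
  destruct (Req_dec pR 0) as [H0|H0]; [right; left; auto|].
  destruct (Req_dec (A_coef r z pR pS) 0) as [HA|HA]; [left; auto|].
  destruct (Req_dec (F2 k r th z pR pS) 0) as [HF|HF]; [right; right; auto|].
  exfalso. apply Hn. apply indep_T1; auto.
Qed.

Lemma ae2 k : 0 < k -> indep_ae (Ham k) (F2 k) (F3 k).
Proof.
  intros Hk. unfold indep_ae.
  eapply null5_mono; [| apply (null_bad3 _ (null_F1 k Hk))].
  intros r th z pR pS [Hr Hn]. simpl.
  destruct (Req_dec pR 0) as [H0|H0]; [right; left; auto|].
  destruct (Req_dec (A_coef r z pR pS) 0) as [HA|HA]; [left; auto|].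
  destruct (Req_dec (F1 k r th z pR pS) 0) as [HF|HF]; [right; right; auto|].
  exfalso. apply Hn. apply indep_T2; auto.
Qed.

Lemma ae3 k : 0 < k -> indep_ae (Ham k) (F1 k) (F2 k).
Proof.
  intros Hk. unfold indep_ae.
  eapply null5_mono; [| apply (null_bad3 _ (null_H k Hk))].
  intros r th z pR pS [Hr Hn]. simpl.
  destruct (Req_dec pR 0) as [H0|H0]; [right; left; auto|].
  destruct (Req_dec (A_coef r z pR pS) 0) as [HA|HA]; [left; auto|].
  destruct (Req_dec (Ham k r th z pR pS) 0) as [HF|HF]; [right; right; auto|].
  exfalso. apply Hn. apply indep_T3; auto.
Qed.

Lemma ae4 k : 0 < k -> indep_ae (F1 k) (F2 k) (F3 k).
Proof.
  intros Hk. unfold indep_ae.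
  eapply null5_mono; [| apply (null_bad3 _ null_z0)].
  intros r th z pR pS [Hr Hn]. simpl.
  destruct (Req_dec pR 0) as [H0|H0]; [right; left; auto|].
  destruct (Req_dec (A_coef r z pR pS) 0) as [HA|HA]; [left; auto|].
  destruct (Req_dec z 0) as [HF|HF]; [right; right; auto|].
  exfalso. apply Hn. apply indep_T4; auto.
Qed.

Lemma relation k r th z pR pS : 0 < r ->
  (F1 k r th z pR pS) ^ 2 + (F2 k r th z pR pS) ^ 2 = 2 * Ham k r th z pR pS * F3 k r th z pR pS + k ^ 2.
Proof.
  intros Hr.
  assert (CS := cs1 th).
  transitivity ((cos (2 * th) ^ 2 + sin (2 * th) ^ 2) * (A_coef r z pR pS ^ 2 + B_coef k r z pR pS ^ 2)).
  { unfold F1, F2. ring. }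
  rewrite CS, Rmult_1_l.
  assert (Hs := sqrt_rho_pos r z Hr).
  assert (HS : sqrt (rho r z) * sqrt (rho r z) = r ^ 4 + 16 * z ^ 2) by (apply sqrt_sqrt; unfold rho; generalize (pow_lt r 4 Hr) (pow2_ge_0 z); lra).
  unfold Ham, F3, A_coef, B_coef.
  set (S := sqrt (rho r z)) in *. clearbody S.
  apply Rminus_diag_uniq.
  field_simplify; try lra.
  assert (h2 : S^2 = r^4 + 16 * z^2) by (rewrite <- HS; ring).
  assert (h3 : S^3 = (r^4 + 16 * z^2) * S) by (rewrite <- HS; ring).
  assert (h4 : S^4 = (r^4 + 16 * z^2)^2) by (rewrite <- HS; ring).
  match goal with |- ?N / ?D = 0 => replace N with 0 by (rewrite ?h2, ?h3, ?h4; ring) end. unfold Rdiv; ring.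
Qed.

Theorem theorem2 (k : R) (hk : 0 < k) :
  first_integral k (F1 k) /\ first_integral k (F2 k) /\ first_integral k (F3 k) /\
  indep_ae (Ham k) (F1 k) (F2 k) /\ indep_ae (Ham k) (F1 k) (F3 k) /\
  indep_ae (Ham k) (F2 k) (F3 k) /\ indep_ae (F1 k) (F2 k) (F3 k) /\
  (forall r th z pR pS : R, 0 < r ->
     (F1 k r th z pR pS) ^ 2 + (F2 k r th z pR pS) ^ 2
     = 2 * Ham k r th z pR pS * F3 k r th z pR pS + k ^ 2).
Proof.
  split; [apply F1_fi|]. split; [apply F2_fi|]. split; [apply F3_fi|].
  split; [apply ae3; auto|]. split; [apply ae1; auto|]. split; [apply ae2; auto|].
  split; [apply ae4; auto|].
  intros. apply relation; auto.
Qed.
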